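(* Let $N\in\mathbb{N}$, $R\ge 2$, $k\ge 2$, and let $p=\lfloor N/(2R^{2k})\rfloor$. Let $\mathcal{T}$ be a transformer model class in which a model is specified by $W$ bits of internal parameters (self-attention and MLP weights), a $D$-bit embedding for each of the $N$ subject tokens, and a $D$-bit embedding for each of the $R$ relation tokens, and whose output is a deterministic function of these bits and the input. Suppose $\mathcal{T}$ solves the $k$-hop factual recall task with zero error without Chain-of-Thought, i.e. for every choice of bijections $g_1,\dots,g_R:[N]\to[N]$ there is a setting of these bits under which, for every input $(s_0,r_1,\dots,r_k)\in[N]\times[R]^k$, the model directly outputs $(g_{r_k}\circ\cdots\circ g_{r_1})(s_0)$. Then \[ W \ge \max\{\mathcal{B}_{global},\ \mathcal{B}_{local}\} - R\cdot D, \] where \[ \mathcal{B}_{global} = (R-1)N\log_2\!\left(\frac{N}{e}\right) - N\cdot D,\qquad \mathcal{B}_{local} = p\Big[R^k(\log_2 N - 1) - D\Big]. \]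
   Context: Write $[N]=\{1,\dots,N\}$. In the $k$-hop factual recall task there are subjects $[N]$ and relations $[R]$, each relation $r$ having a bijection $g_r:[N]\to[N]$; the input is a sequence $(s_0,r_1,\dots,r_k)$ and the correct answer is $y=(g_{r_k}\circ\cdots\circ g_{r_1})(s_0)\in[N]$. ''Without Chain-of-Thought'' means the answer is produced directly as the next token after the input, without generating intermediate tokens. *)

(* Defs.v *)
From mathcomp Require Import all_boot.
From Stdlib Require Import Reals.
Set Implicit Arguments. Unset Strict Implicit. Unset Printing Implicit Defensive.

Notation bits n := (n.-tuple bool).

(* k-hop answer: (g_{r_k} o ... o g_{r_1}) s0, with subjects 'I_N = [N]
   and relations 'I_NR = [R] (0-indexed). *)
Definition khop (N NR k : nat) (g : 'I_NR -> 'I_N -> 'I_N)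
    (s0 : 'I_N) (rs : k.-tuple 'I_NR) : 'I_N :=
  foldl (fun s r => g r s) s0 rs.

(* A transformer model class: a fixed deterministic map which, given
   the W bits of internal parameters (attention/MLP weights), the D-bit
   embedding of the input subject token s0, the D-bit embeddings of the
   relation tokens, and the input (s0, r_1, ..., r_k) itself, produces
   the next token (an element of [N]). *)
Definition model_class (N NR k W D : nat) : Type :=
  bits W -> bits D -> {ffun 'I_NR -> bits D} -> 'I_N -> k.-tuple 'I_NR -> 'I_N.

Definition model_out (N NR k W D : nat) (F : model_class N NR k W D)
    (theta : bits W) (Es : {ffun 'I_N -> bits D}) (Er : {ffun 'I_NR -> bits D})
    (s0 : 'I_N) (rs : k.-tuple 'I_NR) : 'I_N :=
  F theta (Es s0) Er s0 rs.

Definition solves_khop (N NR k W D : nat) (F : model_class N NR k W D) : Prop :=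
  forall g : 'I_NR -> 'I_N -> 'I_N, (forall r, bijective (g r)) ->
  exists (theta : bits W) (Es : {ffun 'I_N -> bits D}) (Er : {ffun 'I_NR -> bits D}),
    forall (s0 : 'I_N) (rs : k.-tuple 'I_NR),
      model_out F theta Es Er s0 rs = khop g s0 rs.

Definition log2 (x : R) : R := (ln x / ln 2)%R.

Definition B_global (N NR D : nat) : R :=
  ((INR NR - 1) * INR N * log2 (INR N / exp 1) - INR N * INR D)%R.

Definition p_local (N NR k : nat) : nat := N %/ (2 * NR ^ (2 * k)).

Definition B_local (N NR k D : nat) : R :=
  (INR (p_local N NR k) * (INR NR ^ k * (log2 (INR N) - 1) - INR D))%R.

(* Main.v *)
Require Import Defs.
From mathcomp Require Import all_boot.
From Stdlib Require Import Reals Lra.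
From mathcomp Require Import zify.
Import ssrnat.
Set Implicit Arguments. Unset Strict Implicit. Unset Printing Implicit Defensive.
Section RealLemmas.
Local Open Scope R_scope.

Lemma INR_muln (a b : nat) : INR (a * b)%N = INR a * INR b.
Proof. by rewrite -mult_INR. Qed.
Lemma INR_addn (a b : nat) : INR (a + b)%N = INR a + INR b.
Proof. by rewrite -plus_INR. Qed.
Lemma INR_expn (a b : nat) : INR (expn a b) = INR a ^ b.
Proof. elim: b => [|b IH]; first by rewrite expn0 /=. by rewrite expnS INR_muln IH. Qed.
Lemma INR_leq (a b : nat) : (a <= b)%N -> INR a <= INR b.
Proof. by move=> /leP; apply: le_INR. Qed.

Lemma ln2_pos : 0 < ln 2.
Proof. have := ln_lt_2; lra. Qed.

Lemma log_bound (x : R) (e n : nat) : 0 < x -> x ^ e <= 2 ^ n -> INR e * log2 x <= INR n.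
Proof.
move=> x0 h.
have l : INR e * ln x <= INR n * ln 2.
  rewrite -!ln_pow; try lra.
  case: (Rle_lt_or_eq _ _ h) => [h'|->]; last by lra.
  by apply/Rlt_le/ln_increasing=> //; apply: pow_lt.
have := ln2_pos => l2.
rewrite /log2. apply (Rmult_le_reg_r (ln 2)) => //.
replace (INR e * (ln x / ln 2) * ln 2) with (INR e * ln x) by (field; lra). done.
Qed.

Lemma exp_pow (y : R) (n : nat) : exp y ^ n = exp (INR n * y).
Proof.
elim: n => [|n IH]; first by rewrite /= Rmult_0_l exp_0.
change (exp y ^ n.+1) with (exp y * exp y ^ n).
rewrite IH -exp_plus S_INR; f_equal; ring.
Qed.

Lemma key (N : nat) : INR N.+1 ^ N <= exp 1 * INR N ^ N.
Proof.
case: N => [|N]; first by rewrite /= Rmult_1_r; have := exp_ineq1 1; lra.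
set M := INR N.+1.
have M0 : 0 < M by apply: lt_0_INR; apply/ltP.
have e1 : INR N.+2 = M * (1 + / M) by rewrite (S_INR N.+1) -/M; field; lra.
rewrite e1 -[X in X <= _]/((M * (1 + / M)) ^ N.+1) Rpow_mult_distr.
rewrite -[X in _ <= _ * X]/(M ^ N.+1) Rmult_comm.
apply: Rmult_le_compat_r; first by apply: pow_le; lra.
have h : 1 + / M <= exp (/ M).
  have := exp_ineq1 (/ M); have : / M <> 0 by apply: Rinv_neq_0_compat; lra. lra.
apply: Rle_trans (pow_incr _ _ N.+1 _) _; first by split; [have := Rinv_0_lt_compat M M0; lra| exact h].
rewrite exp_pow -/M; right; f_equal; field; lra.
Qed.

Lemma fact_bound (N : nat) : INR N ^ N <= INR (N`!) * exp 1 ^ N.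
Proof.
elim: N => [|N IH] /=; first lra.
rewrite factS INR_muln.
have h := key N.
have p0 : 0 <= INR N.+1 by apply: pos_INR.
have e0 : 0 < exp 1 := exp_pos 1.
apply: Rle_trans (Rmult_le_compat_l _ _ _ p0 h) _.
have := Rmult_le_compat_l _ _ _ (Rlt_le _ _ e0) IH. nra.
Qed.

Lemma fact_bound2 (N : nat) : (INR N / exp 1) ^ N <= INR (N`!).
Proof.
rewrite /Rdiv Rpow_mult_distr pow_inv.
have e0 : 0 < exp 1 ^ N := pow_lt _ N (exp_pos 1).
have := fact_bound N.
move=> h. apply (Rmult_le_reg_r (exp 1 ^ N)) => //.
rewrite Rmult_assoc Rinv_l; lra.
Qed.

End RealLemmas.

Lemma count_le (A B O : finType) (obs : A -> O) (Phi : B -> O) :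
  injective obs -> (forall a, exists b, Phi b = obs a) -> #|A| <= #|B|.
Proof.
move=> oi H.
have h1 : #|obs @: [set: A]| = #|A| by rewrite card_imset // cardsT.
have h2 : obs @: [set: A] \subset Phi @: [set: B].
  apply/subsetP => o /imsetP [a _ ->]; have [b hb] := H a.
  by apply/imsetP; exists b; rewrite ?inE.
rewrite -h1 (leq_trans (subset_leq_card h2)) //.
by rewrite (leq_trans (leq_imset_card _ _)) // cardsT.
Qed.

Definition swapf (X : eqType) (a b z : X) := if z == a then b else if z == b then a else z.

Lemma swapfK (X : eqType) (a b : X) : involutive (swapf a b).
Proof.
move=> z; rewrite /swapf.
case: (z =P a) => [->|za].
  rewrite eqxx; case: (b =P a) => [->|ba]; rewrite ?eqxx //.
case: (z =P b) => [->|zb].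
  rewrite eqxx; case: (b =P a) => [->|ba]; rewrite ?eqxx //.
by rewrite (introF eqP za) (introF eqP zb).
Qed.

Fixpoint ext (X : eqType) (s : seq (X * X)) : X -> X :=
  match s with
  | (a, b) :: s' => fun z => swapf (ext s' a) b (ext s' z)
  | [::] => fun z => z
  end.

Lemma ext_bij (X : eqType) (s : seq (X * X)) : bijective (ext s).
Proof.
elim: s => [|[a b] s IH] /=; first by exists (fun z => z).
exact: (bij_comp (inv_bij (swapfK (ext s a) b)) IH).
Qed.

Lemma ext_spec (X : eqType) (s : seq (X * X)) :
  (forall x y, x \in s -> y \in s -> (x.1 == y.1) = (x.2 == y.2)) ->
  forall x, x \in s -> ext s x.1 = x.2.
Proof.
elim: s => [|[a b] s IH] H x //=.
have sub : forall z, z \in s -> z \in (a, b) :: s by move=> z hz; rewrite inE hz orbT.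
have IH' := IH (fun x y hx hy => H x y (sub _ hx) (sub _ hy)).
have gi : injective (ext s) by apply: bij_inj; apply: ext_bij.
rewrite inE => /orP [/eqP -> | xs] /=.
  by rewrite /swapf eqxx.
case: x xs => x y xs /=.
have Hxy := H (x, y) (a, b) (sub _ xs); rewrite inE eqxx /= in Hxy.
have Hxy' := Hxy erefl.
have gxy := IH' _ xs; rewrite /= in gxy.
rewrite /swapf.
case: (x =P a) => [xa|xa].
  subst x; rewrite eqxx in Hxy'.
  by move/esym/eqP: Hxy' => ->; rewrite eqxx.
have yb : y != b by rewrite -Hxy'; apply/eqP.
rewrite gxy.
have -> : (y == ext s a) = false.
  by apply/eqP => e; apply: xa; apply: gi; rewrite gxy.
by rewrite (negbTE yb).
Qed.

Lemma card_injT (A B : finType) :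
  #|{: {f : {ffun A -> B} | injectiveb f}}| = #|B| ^_ #|A|.
Proof. by rewrite card_sig -card_inj_ffuns cardsE. Qed.

Lemma card_bits n : #|{: bits n}| = 2 ^ n.
Proof. by rewrite card_tuple card_bool. Qed.

Section Global.
Variables (N R' K W D : nat) (F : model_class N R'.+1 K.+1 W D).
Hypothesis hs : solves_khop F.

Definition InjN := {f : {ffun 'I_N -> 'I_N} | injectiveb f}.

Definition gG (c : {ffun 'I_R' -> InjN}) (r : 'I_R'.+1) : 'I_N -> 'I_N :=
  if unlift ord0 r is Some i then val (c i) else (fun x => x).

Lemma gG_bij c r : bijective (gG c r).
Proof.
rewrite /gG; case: (unlift ord0 r) => [i|]; last by exists (fun x => x).
by apply: injF_bij; apply/injectiveP; exact: (valP (c i)).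
Qed.

Definition obsG (c : {ffun 'I_R' -> InjN}) : {ffun 'I_N * K.+1.-tuple 'I_R'.+1 -> 'I_N} :=
  [ffun st => khop (gG c) st.1 st.2].

Lemma foldl_id c (x : 'I_N) n : foldl (fun s r => gG c r s) x (nseq n ord0) = x.
Proof. by elim: n => //= n IH; rewrite {2}/gG unlift_none. Qed.

Lemma obsG_inj : injective obsG.
Proof.
move=> c1 c2 e; apply/ffunP => i; apply: val_inj; apply/ffunP => x.
have := congr1 (fun f : {ffun 'I_N * K.+1.-tuple 'I_R'.+1 -> 'I_N} => f (x, cons_tuple (lift ord0 i) (nseq_tuple K ord0))) e.
rewrite !ffunE /khop /= !foldl_id /gG liftK.
done.
Qed.

Definition PhiG (b : bits W * {ffun 'I_N -> bits D} * {ffun 'I_R'.+1 -> bits D}) :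
  {ffun 'I_N * K.+1.-tuple 'I_R'.+1 -> 'I_N} :=
  [ffun st => model_out F b.1.1 b.1.2 b.2 st.1 st.2].

Lemma global_nat : (N`!) ^ R' <= 2 ^ (W + D * N + D * R'.+1).
Proof.
have := count_le obsG_inj (Phi := PhiG) _.
rewrite card_ffun card_injT !card_ord ffactnn !card_prod card_bits !card_ffun !card_bits !card_ord.
rewrite -!expnM -!expnD => H; apply: H.
move=> c; have [th [Es [Er H]]] := hs (gG_bij c).
by exists (th, Es, Er); apply/ffunP => st; rewrite !ffunE H.
Qed.

End Global.

Section Local.
Variables (N R' K W D : nat) (F : model_class N R'.+1 K.+1 W D).
Hypothesis hs : solves_khop F.
Local Notation R := R'.+1.
Local Notation p := (p_local N R K.+1).
Hypothesis hb : (p * K.+1 * R ^ K + p * R ^ K) * 2 <= N.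

Definition V := ('I_p * 'I_K.+1 * {ffun 'I_K -> 'I_R})%type.
Lemma cardV : #|{: V}| = p * K.+1 * R ^ K.
Proof. by rewrite !card_prod card_ffun !card_ord. Qed.
Local Notation T := #|{: V}|.
Lemma hT : T <= N.
Proof. rewrite cardV; lia. Qed.

Definition node (s : 'I_p) (w : seq 'I_R) : 'I_N :=
  widen_ord hT (enum_rank ((s, inord (size w), [ffun i : 'I_K => nth ord0 w i]) : V)).

Lemma node_lt s w : node s w < T.
Proof. rewrite /node /=; exact: ltn_ord. Qed.

Lemma node_inj s w s' w' : size w <= K -> size w' <= K -> node s w = node s' w' ->
  s = s' /\ w = w'.
Proof.
move=> hw hw' /(congr1 val) /= /val_inj /enum_rank_inj [-> e1 e2]; split=> //.
have es : size w = size w'.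
  by move/(congr1 val): e1; rewrite /= !inordK.
apply: (eq_from_nth (x0 := ord0) es) => i hi.
have hiK : i < K by apply: leq_trans hw.
by have := congr1 (fun f : {ffun 'I_K -> 'I_R} => f (Ordinal hiK)) e2; rewrite !ffunE.
Qed.

Local Notation u := (N - T).
Definition L := ('I_p * K.-tuple 'I_R)%type.
Definition InjT := {f : {ffun L -> 'I_u} | injectiveb f}.

Lemma hiP (i : 'I_u) : T + i < N.
Proof. have := ltn_ord i; lia. Qed.
Definition hi (i : 'I_u) : 'I_N := Ordinal (hiP i).

Lemma hi_inj : injective hi.
Proof. by move=> i j /(congr1 val) /= /eqP; rewrite eqn_add2l => /eqP /val_inj. Qed.

Definition allw j : seq (seq 'I_R) := [seq val t | t <- enum {: j.-tuple 'I_R}].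
Definition wordsLt := flatten [seq allw j | j <- iota 0 K].

Lemma mem_wordsLt w : (w \in wordsLt) = (size w < K).
Proof.
apply/flatten_mapP/idP.
  by case=> j; rewrite mem_iota => /andP [_ hj] /mapP [t _ ->]; rewrite size_tuple.
move=> hw; exists (size w); first by rewrite mem_iota.
apply/mapP; exists (Tuple (eqxx (size w))) => //; by rewrite mem_enum.
Qed.

Definition pairs (c : {ffun 'I_R -> InjT}) (r : 'I_R) : seq ('I_N * 'I_N) :=
  [seq (node s w, node s (rcons w r)) | s <- enum 'I_p, w <- wordsLt] ++
  [seq (node st.1 (val st.2), hi (val (c r) st)) | st : L <- enum {: L}].

Lemma pairs_ok c r x y : x \in pairs c r -> y \in pairs c r -> (x.1 == y.1) = (x.2 == y.2).
Proof.
have AB : forall s w s' (t : K.-tuple 'I_R) (i : 'I_u), size w < K ->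
   (node s w == node s' t) = false /\ (node s (rcons w r) == hi i) = false.
  move=> s w s' t i hw; split; apply/eqP.
    move/node_inj => []; rewrite ?size_tuple //; first exact: ltnW.
    by move=> _ e; move: hw; rewrite e size_tuple ltnn.
  move/(congr1 val) => e; have := node_lt s (rcons w r); rewrite e /=; lia.
rewrite !mem_cat => /orP [/allpairsP [[s w] [_ /= hw ->]] | /mapP [[s t] _ ->]]
  /orP [/allpairsP [[s' w'] [_ /= hw' ->]] | /mapP [[s' t'] _ ->]] /=.
- rewrite mem_wordsLt in hw; rewrite mem_wordsLt in hw'.
  apply/eqP/eqP.
    by move/node_inj => [] //; try exact: ltnW; move=> -> ->.
  move/node_inj => []; rewrite ?size_rcons //.
  by move=> -> /rcons_inj [->].
- rewrite mem_wordsLt in hw; by have [-> ->] := AB s w s' t' (val (c r) (s', t')) hw.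
- rewrite mem_wordsLt in hw'; have [e1 e2] := AB s' w' s t (val (c r) (s, t)) hw'.
  by rewrite eq_sym e1 eq_sym e2.
- apply/eqP/eqP.
    by move/node_inj => []; rewrite ?size_tuple // => -> /val_inj ->.
  move/hi_inj => e; have := valP (c r) => /injectiveP ci.
  by case: (ci _ _ e) => -> ->.
Qed.

Definition gL (c : {ffun 'I_R -> InjT}) (r : 'I_R) : 'I_N -> 'I_N := ext (pairs c r).

Lemma gA c r s w : size w < K -> gL c r (node s w) = node s (rcons w r).
Proof.
move=> hw; apply: (ext_spec (@pairs_ok c r) (x := (node s w, node s (rcons w r)))).
rewrite mem_cat; apply/orP; left; apply/allpairsP; exists (s, w); split=> //.
  by rewrite mem_enum.
by rewrite mem_wordsLt.
Qed.

Lemma gB c r s (t : K.-tuple 'I_R) : gL c r (node s t) = hi (val (c r) (s, t)).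
Proof.
apply: (ext_spec (@pairs_ok c r) (x := (node s t, hi (val (c r) (s, t))))).
rewrite mem_cat; apply/orP; right; apply/mapP; exists (s, t) => //.
by rewrite mem_enum.
Qed.

Lemma walk c s w : size w <= K -> foldl (fun x r => gL c r x) (node s [::]) w = node s w.
Proof.
elim/last_ind: w => [|w r IH] //; rewrite size_rcons => hw.
by rewrite foldl_rcons IH ?gA // ltnW.
Qed.

Definition obsL (c : {ffun 'I_R -> InjT}) : {ffun 'I_p * K.+1.-tuple 'I_R -> 'I_N} :=
  [ffun st => khop (gL c) (node st.1 [::]) st.2].

Lemma obsL_inj : injective obsL.
Proof.
move=> c1 c2 e; apply/ffunP => r; apply: val_inj; apply/ffunP => [[s t]].
have := congr1 (fun f : {ffun 'I_p * K.+1.-tuple 'I_R -> 'I_N} => f (s, rcons_tuple t r)) e.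
rewrite !ffunE /khop /= !foldl_rcons !walk ?size_tuple // !gB.
exact: hi_inj.
Qed.

Definition PhiL (b : bits W * {ffun 'I_p -> bits D} * {ffun 'I_R -> bits D}) :
  {ffun 'I_p * K.+1.-tuple 'I_R -> 'I_N} :=
  [ffun st => F b.1.1 (b.1.2 st.1) b.2 (node st.1 [::]) st.2].

Lemma gL_bij c r : bijective (gL c r).
Proof. exact: ext_bij. Qed.

Lemma local_nat : (u ^_ (p * R ^ K)) ^ R <= 2 ^ (W + D * p + D * R).
Proof.
have surj : forall c, exists b, PhiL b = obsL c.
  move=> c; have [th [Es [Er H]]] := hs (gL_bij c).
  exists (th, [ffun s => Es (node s [::])], Er); apply/ffunP => st.
  by rewrite !ffunE -H.
have H := count_le obsL_inj surj.
have e1 : #|{: {ffun 'I_R -> InjT}}| = (u ^_ (p * R ^ K)) ^ R.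
  rewrite card_ffun card_injT card_ord.
  have -> : #|{: L}| = p * R ^ K by rewrite card_prod card_tuple !card_ord.
  by rewrite card_ord.
have e2 : #|{: bits W * {ffun 'I_p -> bits D} * {ffun 'I_R -> bits D}}| = 2 ^ (W + D * p + D * R).
  by rewrite !card_prod card_bits !card_ffun !card_bits !card_ord -!expnM -!expnD.
by rewrite e1 e2 in H.
Qed.

End Local.

Lemma natpowE a b : Nat.pow a b = expn a b.
Proof. by elim: b => [|b IH] //=; rewrite expnS IH. Qed.

Lemma ffact_ge u m : (u - m) ^ m <= u ^_ m.
Proof.
elim: m u => [|m IH] u //; rewrite ffactnS expnS.
have -> : u - m.+1 = u.-1 - m by lia.
apply: leq_mul; [lia | exact: IH].
Qed.

Lemma log2_half (N : nat) : (0 < N)%N -> log2 (INR N / 2) = (log2 (INR N) - 1)%R.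
Proof.
move=> hN; have N0 : (0 < INR N)%R by apply: lt_0_INR; apply/ltP.
have l2 := ln2_pos.
rewrite /log2 /Rdiv ln_mult ?ln_Rinv; try lra.
field; lra.
Qed.

Lemma global_real (N R' W D : nat) : (0 < N)%N ->
  (N`!) ^ R' <= 2 ^ (W + D * N + D * R'.+1) ->
  (INR (N * R') * log2 (INR N / exp 1) <= INR (W + D * N + D * R'.+1))%R.
Proof.
move=> hN h; apply: log_bound.
  apply: Rdiv_lt_0_compat; [apply: lt_0_INR; apply/ltP => // | exact: exp_pos].
have := INR_leq h; rewrite !INR_expn => h2.
apply: Rle_trans h2.
rewrite -[(N * R')%N]/(Nat.mul N R') pow_mult.
apply: pow_incr; split; first by apply: pow_le; apply: Rlt_le; apply: Rdiv_lt_0_compat;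
  [apply: lt_0_INR; apply/ltP | exact: exp_pos].
exact: fact_bound2.
Qed.

Lemma local_real (N a M R n : nat) : (0 < N)%N -> (N <= 2 * a)%N -> (a ^ M) ^ R <= 2 ^ n ->
  (INR (M * R) * log2 (INR N / 2) <= INR n)%R.
Proof.
move=> hN ha h; have N0 : (0 < INR N)%R by apply: lt_0_INR; apply/ltP.
apply: log_bound; first lra.
have := INR_leq h; rewrite !INR_expn => h2.
apply: Rle_trans h2.
rewrite -[(M * R)%N]/(Nat.mul M R) pow_mult.
apply: pow_incr; split; first by apply: pow_le; lra.
apply: pow_incr; split; first lra.
have := INR_leq ha; rewrite INR_muln /=; lra.
Qed.

Theorem theorem2 (N NR k W D : nat) (F : model_class N NR k W D) :
  (2 <= NR)%N -> (2 <= k)%N -> solves_khop F ->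
  (INR W >= Rmax (B_global N NR D) (B_local N NR k D) - INR NR * INR D)%R.
Proof.
move: F; case: NR => [|[|R'']] F //; case: k F => [|[|K']] F // _ _ hs.
have W0 := pos_INR W; have D0 := pos_INR D; have R0 := pos_INR R''.+2.
have G : (B_global N R''.+2 D - INR R''.+2 * INR D <= INR W)%R.
  case: (posnP N) => [->|hN].
    rewrite /B_global; change (INR 0) with 0%R; rewrite !Rmult_0_r !Rmult_0_l; nra.
  have h := global_real hN (global_nat hs).
  rewrite INR_muln !INR_addn !INR_muln in h.
  rewrite /B_global; set X := log2 _ in h *.
  have e : ((INR R''.+2 - 1) * INR N * X = INR N * INR R''.+1 * X)%R by rewrite S_INR; ring.
  rewrite e; nra.
have L : (B_local N R''.+2 K'.+2 D - INR R''.+2 * INR D <= INR W)%R.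
  rewrite /B_local; set p := p_local N R''.+2 K'.+2.
  case: (posnP p) => [->|hp].
    change (INR 0) with 0%R; rewrite Rmult_0_l; nra.
  have hN : (0 < N)%N.
    rewrite lt0n; apply/eqP => N0; move: hp; by rewrite /p /p_local N0 div0n.
  have hdiv : p * (2 * R''.+2 ^ (2 * K'.+2)) <= N.
    by rewrite /p /p_local natpowE; exact: leq_divM.
  have hb : (p * K'.+2 * R''.+2 ^ K'.+1 + p * R''.+2 ^ K'.+1) * 2 <= N.
    have hK : K'.+1.+2 <= R''.+2 ^ K'.+1.+2 by apply: ltnW; apply: ltn_expl.
    have e : R''.+2 ^ (2 * K'.+2) = R''.+2 ^ K'.+1 * R''.+2 ^ K'.+1.+2 by rewrite -expnD; congr expn; lia.
    rewrite e in hdiv.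
    move: hdiv hK; set A := R''.+2 ^ K'.+1; set B := R''.+2 ^ K'.+1.+2; nia.
  have h1 := local_nat hs hb.
  have h2 := ffact_ge (N - #|{: V N R''.+1 K'.+1}|) (p * R''.+2 ^ K'.+1).
  have h3 : ((N - #|{: V N R''.+1 K'.+1}| - p * R''.+2 ^ K'.+1) ^ (p * R''.+2 ^ K'.+1)) ^ R''.+2 <= 2 ^ (W + D * p + D * R''.+2).
    apply: leq_trans h1; by rewrite leq_exp2r.
  have h4 : N <= 2 * (N - #|{: V N R''.+1 K'.+1}| - p * R''.+2 ^ K'.+1).
    rewrite cardV; lia.
  have h := local_real hN h4 h3.
  rewrite log2_half // in h.
  rewrite !INR_muln !INR_addn !INR_muln INR_expn in h.
  change (INR R''.+2 ^ K'.+2)%R with (INR R''.+2 * INR R''.+2 ^ K'.+1)%R.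
  set X := log2 _ in h *; set Y := (INR R''.+2 ^ K'.+1)%R in h *.
  nra.
apply: Rle_ge; unfold Rmax; case: Rle_dec => _; lra.
Qed.
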